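(* Let $\Sigma$ be a mirror curve of a toric Calabi-Yau threefold, written in the form $1+x+y+\sum_{i=1}^k r_i x^{m_i}y^{n_i}=0$ in $(\mathbb{C}^* )^2$ for some integers $m_i,n_i$ and parameters $r_i$, and for an integer $f$ let $\Sigma_f$ be the framed curve $1+XY^{-f}+Y+\sum_{i=1}^k r_i (XY^{-f})^{m_i}Y^{n_i}=0$ in $(\mathbb{C}^* )^2$. Then there are at most finitely many values of $f$ for which the map $X:\Sigma_f\to\mathbb{C}^*$ fails to be a branched covering; i.e. for generic framing $f$, $X:\Sigma_f\to\mathbb{C}^*$ is a branched covering. *)

(* Defs.v *)
From HB Require Import structures.
From mathcomp Require Import all_boot all_order all_algebra.
Set Implicit Arguments. Unset Strict Implicit. Unset Printing Implicit Defensive.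
Import Order.TTheory GRing.Theory Num.Theory.
Local Open Scope ring_scope.

Definition framedPoly (C : numClosedFieldType) (k : nat)
  (r : 'I_k -> C) (m n : 'I_k -> int) (f : int) (X Y : C) : C :=
  1 + X * Y ^ (- f) + Y + \sum_(i < k) r i * (X * Y ^ (- f)) ^ (m i) * Y ^ (n i).

Definition framedCurve (C : numClosedFieldType) (k : nat)
  (r : 'I_k -> C) (m n : 'I_k -> int) (f : int) (X Y : C) : Prop :=
  X != 0 /\ Y != 0 /\ framedPoly r m n f X Y = 0.

(* The projection (X,Y) |-> X from a curve S in (C^x)^2 to C^x is a
   branched covering: it is surjective onto C^x, has finite fibres, and is
   proper (the preimage of every closed annulus a <= |X| <= b, i.e. of every
   compact subset of C^x, stays in a compact subset of (C^x)^2, i.e.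
   |Y| is bounded above and away from 0). *)
Definition X_branched_covering (C : numClosedFieldType) (S : C -> C -> Prop)
  : Prop :=
  [/\ (forall x : C, x != 0 -> exists y, S x y),
      (forall x : C, x != 0 -> exists s : seq C, forall y, S x y <-> y \in s) &
      (forall a b : C, 0 < a -> a <= b ->
         exists M : C, 0 < M /\
           forall x y, S x y -> a <= `|x| <= b -> M^-1 <= `|y| <= M)].

(* Main.v *)
Require Import Defs.
From HB Require Import structures.
From mathcomp Require Import all_boot all_order all_algebra.
From mathcomp Require Import zify.
Import Order.TTheory GRing.Theory Num.Theory.
Local Open Scope ring_scope.

Lemma normrXz' (C : numFieldType) (x : C) (z : int) : `|x ^ z| = `|x| ^ z.
Proof. by case: z => n /=; rewrite ?normfV normrX. Qed.

Lemma cauchy (C : numFieldType) (J : finType) (u : J -> C) (e : J -> int)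
  (j0 : J) (y B L : C) :
  y != 0 -> \sum_j u j * y ^ e j = 0 ->
  (forall j, j != j0 -> u j != 0 -> e j < e j0) ->
  \sum_j `|u j| <= B -> 0 < L -> L <= `|u j0| -> `|y| <= 1 + B / L.
Proof.
move=> y0 hsum hlt hB L0 hL.
have B0 : 0 <= B by apply: le_trans hB; apply: sumr_ge0 => j _.
have BL0 : 0 <= B / L by rewrite divr_ge0 // ltW.
have [hy1|] := boolP (`|y| <= 1).
  by apply: le_trans hy1 _; rewrite lerDl.
rewrite -real_ltNge ?real1 ?normr_real // => hy.
pose t : C := `|y|; pose E := e j0.
have t0 : 0 < t by rewrite normr_gt0.
have tE1 : 0 < t ^ (E - 1) by rewrite exprz_gt0.
have tE : t ^ E = t * t ^ (E - 1).
  by rewrite -{2}(expr1z t) -expfzDr ?gt_eqF // addrC subrK.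
have key : `|u j0| * t ^ E <= (\sum_(j | j != j0) `|u j|) * t ^ (E - 1).
  move: hsum; rewrite (bigD1 j0) //= => /eqP; rewrite addr_eq0 => /eqP h.
  rewrite -normrXz' -normrM h normrN mulr_suml.
  apply: le_trans (ler_norm_sum _ _ _) _.
  apply: ler_sum => j hj; rewrite normrM normrXz'.
  have [->|uj0] := eqVneq (u j) 0; first by rewrite normr0 !mul0r.
  apply: ler_pM => //; rewrite ?exprz_ge0 //.
  have := hlt j hj uj0; rewrite -/E => hjE.
  have -> : E - 1 = e j + Posz (absz (E - 1 - e j)%R) by lia.
  rewrite expfzDr ?gt_eqF // ler_peMr ?exprz_ge0 //.
  by rewrite /= exprn_ege1 // ltW.
have hs : \sum_(j | j != j0) `|u j| <= B.
  apply: le_trans hB; by rewrite [X in _ <= X](bigD1 j0) //= lerDr.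
have : L * t * t ^ (E - 1) <= B * t ^ (E - 1).
  have h2 : (\sum_(j | j != j0) `|u j|) * t ^ (E - 1) <= B * t ^ (E - 1).
    by apply: ler_wpM2r; [exact: ltW|].
  apply: le_trans h2; apply: le_trans key.
  by rewrite tE mulrA ler_pM2r // ler_pM2r.
rewrite ler_pM2r // => hLt.
have h3 : t <= B / L by rewrite ler_pdivlMr // mulrC.
by apply: le_trans h3 _; rewrite lerDr ler01.
Qed.

Lemma pow_le_sum (C : numFieldType) (a b t : C) (z : int) :
  0 < a -> a <= t -> t <= b -> t ^ z <= a ^ z + b ^ z.
Proof.
move=> a0 hat htb.
have t0 : 0 < t by apply: lt_le_trans hat.
have b0 : 0 < b by apply: lt_le_trans htb.
case: z => n /=.
  apply: le_trans (_ : b ^+ n <= _); last by rewrite lerDr exprn_ge0 // ltW.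
  by apply: lerXn2r; rewrite // ?nnegrE ltW.
apply: le_trans (_ : (a ^+ n.+1)^-1 <= _); last by rewrite lerDl invr_ge0 exprn_ge0 // ltW.
rewrite lef_pV2 ?posrE ?exprn_gt0 //.
by apply: lerXn2r; rewrite // ?nnegrE ltW.
Qed.

Lemma pow_ge_inv (C : numFieldType) (a b t : C) (z : int) :
  0 < a -> a <= t -> t <= b -> (a ^ (- z) + b ^ (- z))^-1 <= t ^ z.
Proof.
move=> a0 hat htb.
have t0 : 0 < t by apply: lt_le_trans hat.
have b0 : 0 < b by apply: lt_le_trans htb.
have := @pow_le_sum C a b t (- z) a0 hat htb.
move=> h.
have -> : t ^ z = (t ^ (- z))^-1 by rewrite invr_expz opprK.
by rewrite lef_pV2 ?posrE ?addr_gt0 ?exprz_gt0.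
Qed.

Lemma poly_part (C : numClosedFieldType) (J : finType) (u : J -> C) (e : J -> int)
  (einj : injective e) (jmin jmax : J) :
  u jmin != 0 -> u jmax != 0 -> e jmin < e jmax ->
  (forall j, u j != 0 -> e jmin <= e j) ->
  exists q : {poly C}, [/\ q.[0] != 0, size q != 1%N &
    forall y, y != 0 -> \sum_j u j * y ^ e j = y ^ e jmin * q.[y]].
Proof.
move=> umin umax hlt hmin.
pose q : {poly C} := \sum_(j | u j != 0) u j *: 'X^(absz (e j - e jmin)%R).
have hcoef : forall j, u j != 0 -> q`_(absz (e j - e jmin)%R) = u j.
  move=> j uj; rewrite coef_sum (bigD1 j) //= coefZ coefXn eqxx mulr1.
  rewrite big1 ?addr0 // => i /andP [ui hij]; rewrite coefZ coefXn.
  case: eqP => h; last by rewrite mulr0.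
  have hi := hmin i ui; have hj := hmin j uj.
  have : e j = e i by lia.
  by move/einj => eji; rewrite eji eqxx in hij.
exists q; split.
- by have h0 := hcoef jmin umin; rewrite subrr in h0; rewrite horner_coef0 h0.
- have hD := hcoef jmax umax.
  have : (absz (e jmax - e jmin)%R < size q)%N.
    rewrite ltnNge; apply/negP => hs.
    by move: umax; rewrite -hD nth_default // eqxx.
  have : (0 < absz (e jmax - e jmin)%R)%N by lia.
  move=> h1 h2; apply/eqP => hq; rewrite hq in h2; lia.
- move=> y y0.
  rewrite (bigID (fun j => u j != 0)) /= [X in _ + X]big1 ?addr0; last first.
    by move=> j; rewrite negbK => /eqP ->; rewrite mul0r.
  rewrite horner_sum mulr_sumr; apply: eq_bigr => j uj.
  rewrite hornerZ hornerXn.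
  have hj := hmin j uj.
  have -> : y ^ e j = y ^ e jmin * y ^ Posz (absz (e j - e jmin)%R).
    by rewrite -expfzDr //; congr (_ ^ _); lia.
  by rewrite [LHS]mulrCA.
Qed.
Lemma ex_min (J : finType) (P : pred J) (g : J -> int) (j1 : J) :
  P j1 -> exists j, P j /\ forall i, P i -> g j <= g i.
Proof.
move=> Pj1.
case: (arg_minP g Pj1) => j Pj Hj.
by exists j; split.
Qed.

Lemma covering (C : numClosedFieldType) (J : finType) (c : J -> C)
  (am e : J -> int) (einj : injective e) (j1 j2 : J) (S : C -> C -> Prop) :
  j1 != j2 -> c j1 != 0 -> c j2 != 0 ->
  (forall x y, S x y <->
     x != 0 /\ y != 0 /\ \sum_j c j * x ^ am j * y ^ e j = 0) ->
  X_branched_covering S.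
Proof.
move=> j12 c1 c2 hS.
have [jmin [cmin hmin]] := @ex_min J (fun j => c j != 0) e j1 c1.
have [jmax [cmax hmax']] := @ex_min J (fun j => c j != 0) (fun j => - e j) j1 c1.
have hmax : forall j, c j != 0 -> e j <= e jmax.
  by move=> j cj; have := hmax' j cj; lia.
have e12 : e j1 != e j2 by apply: contra j12 => /eqP /einj ->.
have hlt : e jmin < e jmax.
  have := hmin j1 c1; have := hmin j2 c2; have := hmax j1 c1; have := hmax j2 c2.
  move: e12; lia.
have ux : forall x j, x != 0 -> (c j * x ^ am j != 0) = (c j != 0).
  move=> x j x0; apply/idP/idP => [|cj]; last by rewrite mulf_neq0 ?expfz_neq0.
  by apply: contra => /eqP ->; rewrite mul0r.
have hpoly : forall x, x != 0 -> exists q : {poly C}, [/\ q.[0] != 0, size q != 1%N &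
    forall y, y != 0 -> \sum_j (c j * x ^ am j) * y ^ e j = y ^ e jmin * q.[y]].
  move=> x x0; apply: (@poly_part C J (fun j => c j * x ^ am j) e einj jmin jmax); rewrite ?ux //.
  by move=> j; rewrite ux //; apply: hmin.
split.
- move=> x x0; have [q [q0 qs qe]] := hpoly x x0.
  case/closed_rootP: qs => z /rootP hz.
  have z0 : z != 0 by apply/eqP => hz0; move: q0; rewrite -[X in q.[X]]hz0 hz eqxx.
  exists z; apply/hS; split => //; split => //.
  by rewrite qe // hz mulr0.
- move=> x x0; have [q [q0 qs qe]] := hpoly x x0.
  have [s hs] := closed_field_poly_normal q.
  have lq : lead_coef q != 0.
    by rewrite lead_coef_eq0; apply: contraNneq q0 => ->; rewrite horner0.
  exists s => y; rewrite hS; split.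
  + move=> [_ [y0 hy]]; move: hy; rewrite qe // => /eqP.
    rewrite mulf_eq0 expfz_eq0 (negbTE y0) andbF /= => hr.
    by rewrite -root_prod_XsubC -(rootZ _ _ lq) -hs.
  + rewrite -root_prod_XsubC -(rootZ _ _ lq) -hs => /rootP hy.
    have y0 : y != 0 by apply/eqP => hy0; move: q0; rewrite -[X in q.[X]]hy0 hy eqxx.
    by split => //; split => //; rewrite qe // hy mulr0.
- move=> a b a0 hab.
  have b0 : 0 < b by apply: lt_le_trans hab.
  pose B := \sum_j `|c j| * (a ^ am j + b ^ am j).
  pose L1 := `|c jmax| * (a ^ (- am jmax) + b ^ (- am jmax))^-1.
  pose L2 := `|c jmin| * (a ^ (- am jmin) + b ^ (- am jmin))^-1.
  have L10 : 0 < L1 by rewrite mulr_gt0 ?normr_gt0 ?invr_gt0 ?addr_gt0 ?exprz_gt0.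
  have L20 : 0 < L2 by rewrite mulr_gt0 ?normr_gt0 ?invr_gt0 ?addr_gt0 ?exprz_gt0.
  have B0 : 0 <= B.
    by apply: sumr_ge0 => j _; rewrite mulr_ge0 ?addr_ge0 ?exprz_ge0 // ltW.
  pose M1 := 1 + B / L1; pose M2 := 1 + B / L2.
  have M10 : 0 < M1 by apply: (lt_le_trans ltr01); rewrite lerDl divr_ge0 // ltW.
  have M20 : 0 < M2 by apply: (lt_le_trans ltr01); rewrite lerDl divr_ge0 // ltW.
  exists (M1 + M2); split; first by rewrite addr_gt0.
  move=> x y /hS [x0 [y0 hsum]] /andP [hax hxb].
  have hB : \sum_j `|c j * x ^ am j| <= B.
    apply: ler_sum => j _; rewrite normrM normrXz' ler_wpM2l //.
    exact: pow_le_sum.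
  have hL : forall j0, `|c j0| * (a ^ (- am j0) + b ^ (- am j0))^-1
                        <= `|c j0 * x ^ am j0|.
    by move=> j0; rewrite normrM normrXz' ler_wpM2l // pow_ge_inv.
  have hup : `|y| <= M1.
    apply: (@cauchy C J (fun j => c j * x ^ am j) e jmax) => //.
    + move=> j hj; rewrite ux // => cj.
      by rewrite lt_neqAle hmax // andbT; apply: contra hj => /eqP /einj ->.
    + exact: hL.
  have hdown : `|y^-1| <= M2.
    apply: (@cauchy C J (fun j => c j * x ^ am j) (fun j => - e j) jmin) => //.
    + by rewrite invr_eq0.
    + rewrite -[RHS]hsum; apply: eq_bigr => j _; by rewrite exprz_inv opprK.
    + move=> j hj; rewrite ux // => cj.
      rewrite ltrN2 lt_neqAle hmin // andbT.
      by apply: contra hj => /eqP /einj ->.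
    + exact: hL.
  apply/andP; split.
    have M0 : 0 < M1 + M2 by rewrite addr_gt0.
    rewrite -[`|y|]invrK lef_pV2 ?posrE ?invr_gt0 ?normr_gt0 //.
    by rewrite -normfV; apply: le_trans hdown _; rewrite lerDr ltW.
  by rewrite (le_trans hup) // lerDl ltW.
Qed.

Definition cJ (C : numClosedFieldType) (k : nat) (r : 'I_k -> C)
  (j : ('I_3 + 'I_k)%type) : C :=
  match j with inl _ => 1 | inr i => r i end.
Definition mJ (k : nat) (m : 'I_k -> int) (j : ('I_3 + 'I_k)%type) : int :=
  match j with inl i => if val i == 1%N then 1 else 0 | inr i => m i end.
Definition nJ (k : nat) (n : 'I_k -> int) (j : ('I_3 + 'I_k)%type) : int :=
  match j with inl i => if val i == 2%N then 1 else 0 | inr i => n i end.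

Arguments cJ {C k} r j. Arguments mJ {k} m j. Arguments nJ {k} n j.

Lemma framed_eq (C : numClosedFieldType) (k : nat) (r : 'I_k -> C)
  (m n : 'I_k -> int) (f : int) (X Y : C) : Y != 0 ->
  framedPoly r m n f X Y =
  \sum_j cJ r j * X ^ mJ m j * Y ^ (nJ n j - f * mJ m j).
Proof.
move=> Y0; rewrite /framedPoly big_sumType /= !big_ord_recl big_ord0 /=.
rewrite ?mul1r ?mulr0 ?subr0 ?sub0r ?mulr1 ?expr0z ?expr1z ?mul1r ?mulr1 ?addr0 ?addrA.
congr (_ + _); apply: eq_bigr => i _.
rewrite expfzMl exprz_exp -!mulrA -expfzDr //.
by rewrite mulNr addrC.
Qed.

Lemma pair_inj (k : nat) (m n : 'I_k -> int)
  (Hdistinct : injective (fun i : 'I_k => (m i, n i)))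
  (Hnew : forall i : 'I_k,
      (m i, n i) \notin [:: (0%Z, 0%Z); (1%Z, 0%Z); (0%Z, 1%Z)]) :
  forall p q, mJ m p = mJ m q -> nJ n p = nJ n q -> p = q.
Proof.
have I3 : forall i : 'I_3, i = ord0 \/ i = inord 1 \/ i = inord 2.
  move=> i; case: i => [[|[|[|]]] hi] //.
  - by left; apply: val_inj.
  - by right; left; apply: val_inj; rewrite /= inordK.
  - by right; right; apply: val_inj; rewrite /= inordK.
case=> [i|i] [j|j] /=.
- case: i => [[|[|[|i']]] hi]; case: j => [[|[|[|j']]] hj] //= hm hn;
    try discriminate; try (by congr inl; apply: val_inj).
- case: i => [[|[|[|i']]] hi] //= hm hn; have := Hnew j; by rewrite -hm -hn.
- case: j => [[|[|[|j']]] hj] //= hm hn; have := Hnew i; by rewrite hm hn.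
- by move=> hm hn; congr inr; apply: Hdistinct; rewrite /= hm hn.
Qed.

Theorem mainTheorem2 (C : numClosedFieldType) (k : nat)
  (r : 'I_k -> C) (m n : 'I_k -> int)
  (Hdistinct : injective (fun i : 'I_k => (m i, n i)))
  (Hnew : forall i : 'I_k,
      (m i, n i) \notin [:: (0%Z, 0%Z); (1%Z, 0%Z); (0%Z, 1%Z)]) :
  exists bad : seq int, forall f : int,
    f \notin bad -> X_branched_covering (framedCurve r m n f).
Proof.
have pinj := @pair_inj k m n Hdistinct Hnew.
exists [seq ((nJ n q - nJ n p) %/ (mJ m q - mJ m p))%Z
         | p <- enum {: 'I_3 + 'I_k}, q <- enum {: 'I_3 + 'I_k}].
move=> f hf.
have einj : injective (fun j => nJ n j - f * mJ m j).
  move=> p q /= he.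
  have [hm|hm] := eqVneq (mJ m p) (mJ m q).
    apply: pinj => //; move: he; rewrite hm; lia.
  exfalso; move/negP: hf; apply.
  have hd : mJ m q - mJ m p != 0 by rewrite subr_eq0 eq_sym.
  have -> : f = ((nJ n q - nJ n p) %/ (mJ m q - mJ m p))%Z.
    have -> : nJ n q - nJ n p = f * (mJ m q - mJ m p) by nia.
    by rewrite mulzK.
  by apply: allpairs_f; rewrite mem_enum.
apply: (@covering C _ (cJ r) (mJ m) _ einj (inl ord0) (inl (inord 2))).
- by apply/eqP => -[] /(congr1 val); rewrite /= inordK.
- exact: oner_neq0.
- exact: oner_neq0.
- move=> x y; rewrite /framedCurve; split => -[x0 [y0 h]]; do !split => //.
    by rewrite -framed_eq.
  by rewrite framed_eq.
Qed.
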